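(* Let $A\subset\mathbb{N}\setminus\{1\}$. If $L(A)$ is lineable, then there exists an integer $k\ge1$ such that $A\cap(A-k)$ is infinite, where $A-k=\{a-k: a\in A\}$.
   Context: $\ell^\infty$ is the space of bounded real sequences with the sup norm. For $x\in\ell^\infty$, $L_x$ denotes the set of accumulation points (subsequential limits) of $x$. For a set $A$ of cardinalities, $L(A)=\{x\in\ell^\infty: |L_x|\in A\}$. A subset $Y$ of a vector space is lineable if $Y\cup\{0\}$ contains an infinite-dimensional linear subspace. *)

(* Defs.v *)
From Stdlib Require Import Reals List.
Open Scope R_scope.

Definition bounded_seq (x : nat -> R) : Prop :=
  exists M : R, forall n : nat, Rabs (x n) <= M.

Definition accumulation_point (x : nat -> R) (l : R) : Prop :=
  exists phi : nat -> nat,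
    (forall n : nat, (phi n < phi (S n))%nat) /\ Un_cv (fun n => x (phi n)) l.

Definition set_card_eq (S : R -> Prop) (m : nat) : Prop :=
  exists l : list R, NoDup l /\ length l = m /\ (forall r : R, S r <-> In r l).

Definition L_of (A : nat -> Prop) (x : nat -> R) : Prop :=
  bounded_seq x /\ exists m : nat, A m /\ set_card_eq (accumulation_point x) m.

Definition zero_seq : nat -> R := fun _ => 0.

Definition linear_subspace (V : (nat -> R) -> Prop) : Prop :=
  V zero_seq /\
  (forall x y, V x -> V y -> V (fun n => x n + y n)) /\
  (forall (c : R) x, V x -> V (fun n => c * x n)).

Definition lin_indep (m : nat) (f : nat -> nat -> R) : Prop :=
  forall c : nat -> R,
    (forall n : nat, sum_f_R0 (fun i => c i * f i n) (pred m) = 0) ->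
    forall i : nat, (i < m)%nat -> c i = 0.

Definition infinite_dimensional (V : (nat -> R) -> Prop) : Prop :=
  forall m : nat, exists f : nat -> nat -> R,
    (forall i : nat, (i < m)%nat -> V (f i)) /\ lin_indep m f.

Definition lineable (Y : (nat -> R) -> Prop) : Prop :=
  exists V : (nat -> R) -> Prop,
    linear_subspace V /\ infinite_dimensional V /\
    (forall x, V x -> Y x \/ x = zero_seq).

(* Main.v *)
Require Import Defs.
From Stdlib Require Import Reals List Lra Lia Arith Classical ClassicalEpsilon Rtopology.
Open Scope R_scope.


Lemma abs_lt (u e : R) : Rabs u < e <-> -e < u < e.
Proof. unfold Rabs; destruct (Rcase_abs u); split; intros; lra. Qed.
Lemma abs_le (u e : R) : Rabs u <= e <-> -e <= u <= e.
Proof. unfold Rabs; destruct (Rcase_abs u); split; intros; lra. Qed.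

Definition freq (P : nat -> Prop) := forall N, exists n, (N <= n)%nat /\ P n.
Definition cl (x : nat -> R) (a : R) :=
  forall eps, 0 < eps -> freq (fun n => Rabs (x n - a) < eps).
Definition cl2 (x y : nat -> R) (a b : R) :=
  forall eps, 0 < eps -> freq (fun n => Rabs (x n - a) < eps /\ Rabs (y n - b) < eps).

Lemma small_inv (eps : R) : 0 < eps -> exists K, forall n, (K <= n)%nat -> / (INR n + 1) < eps.
Proof.
  intros He. destruct (archimed_cor1 eps He) as [K [HK HK0]].
  exists K. intros n Hn.
  apply Rle_lt_trans with (/ INR K); [|exact HK].
  apply Rinv_le_contravar. apply lt_0_INR; lia.
  apply le_INR in Hn. lra.
Qed.

Lemma inv_pos (n : nat) : 0 < / (INR n + 1).
Proof. apply Rinv_0_lt_compat. pose proof (pos_INR n). lra. Qed.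

Lemma strict_ge (phi : nat -> nat) : (forall n, (phi n < phi (S n))%nat) -> forall n, (n <= phi n)%nat.
Proof. intros H n; induction n; [lia|]. specialize (H n); lia. Qed.

Lemma acc_cl (x : nat -> R) (a : R) : accumulation_point x a <-> cl x a.
Proof.
  split.
  - intros [phi [Hphi Hcv]] eps He N.
    destruct (Hcv eps He) as [K HK].
    exists (phi (Nat.max N K)). split.
    + pose proof (strict_ge phi Hphi (Nat.max N K)). lia.
    + apply (HK (Nat.max N K)). lia.
  - intros H.
    assert (Hp : forall N k, exists n, (N <= n)%nat /\ Rabs (x n - a) < / (INR k + 1)).
    { intros N k. apply (H _ (inv_pos k) N). }
    pose (pick := fun N k => proj1_sig (constructive_indefinite_description _ (Hp N k))).
    assert (Hpick : forall N k, (N <= pick N k)%nat /\ Rabs (x (pick N k) - a) < / (INR k + 1)).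
    { intros N k. unfold pick. destruct (constructive_indefinite_description _ (Hp N k)); auto. }
    pose (phi := fix phi k := match k with O => pick O O | S k' => pick (S (phi k')) (S k') end).
    exists phi. split.
    + intros n. simpl. destruct (Hpick (S (phi n)) (S n)). lia.
    + intros eps He. destruct (small_inv eps He) as [K HK]. exists K. intros n Hn.
      unfold R_dist. apply Rlt_trans with (/ (INR n + 1)); [|apply HK; exact Hn].
      destruct n; simpl; apply Hpick.
Qed.

Lemma BW_sub (y : nat -> R) (phi : nat -> nat) : bounded_seq y ->
  exists b, forall eps, 0 < eps -> forall N, exists k, (N <= k)%nat /\ Rabs (y (phi k) - b) < eps.
Proof.
  intros [M HM].
  destruct (Bolzano_Weierstrass (fun k => y (phi k)) (fun c => -M <= c <= M) (compact_P3 (-M) M))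
    as [b Hb].
  { intros k. apply abs_le. apply HM. }
  exists b. intros eps He N.
  destruct (Hb (disc b (mkposreal eps He)) N) as [k [Hk Hv]].
  - exists (mkposreal eps He). intros z Hz; exact Hz.
  - exists k. split; auto.
Qed.

Lemma BW2_sub (x y : nat -> R) (phi : nat -> nat) : bounded_seq x -> bounded_seq y ->
  (forall k, (k <= phi k)%nat) ->
  exists a b, forall eps, 0 < eps -> forall N, exists k, (N <= k)%nat /\
     Rabs (x (phi k) - a) < eps /\ Rabs (y (phi k) - b) < eps.
Proof.
  intros Bx By Hphi.
  destruct (BW_sub x phi Bx) as [a Ha].
  assert (Hp : forall j, exists k, (j <= k)%nat /\ Rabs (x (phi k) - a) < / (INR j + 1)).
  { intros j. apply (Ha _ (inv_pos j) j). }
  pose (kk := fun j => proj1_sig (constructive_indefinite_description _ (Hp j))).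
  assert (Hkk : forall j, (j <= kk j)%nat /\ Rabs (x (phi (kk j)) - a) < / (INR j + 1)).
  { intros j. unfold kk. destruct (constructive_indefinite_description _ (Hp j)); auto. }
  destruct (BW_sub y (fun j => phi (kk j)) By) as [b Hb].
  exists a, b. intros eps He N.
  destruct (small_inv eps He) as [K HK].
  destruct (Hb eps He (Nat.max N K)) as [j [Hj Hyj]].
  exists (kk j). destruct (Hkk j) as [H1 H2]. split; [lia|]. split; auto.
  apply Rlt_trans with (/ (INR j + 1)); auto. apply HK. lia.
Qed.

Lemma sub_cl2 (x y : nat -> R) (phi : nat -> nat) a b :
  (forall k, (k <= phi k)%nat) ->
  (forall eps, 0 < eps -> forall N, exists k, (N <= k)%nat /\
     Rabs (x (phi k) - a) < eps /\ Rabs (y (phi k) - b) < eps) -> cl2 x y a b.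
Proof.
  intros Hphi H eps He N. destruct (H eps He N) as [k [Hk Hxy]].
  exists (phi k). split; auto. specialize (Hphi k). lia.
Qed.

Lemma zero_of_small (d K : R) : 0 < K -> (forall eps, 0 < eps -> Rabs d < eps * K) -> d = 0.
Proof.
  intros HK H. destruct (Req_dec d 0) as [|Hd]; auto.
  assert (Ha : 0 < Rabs d) by (apply Rabs_pos_lt; auto).
  assert (He : 0 < Rabs d / K) by (apply Rdiv_lt_0_compat; auto).
  specialize (H _ He). unfold Rdiv in H. rewrite Rmult_assoc, Rinv_l in H by lra. lra.
Qed.

Lemma cl_sub (z : nat -> R) (c : R) : cl z c ->
  exists phi : nat -> nat, (forall k, (k <= phi k)%nat) /\ forall k, Rabs (z (phi k) - c) < / (INR k + 1).
Proof.
  intros H.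
  assert (Hp : forall k, exists n, (k <= n)%nat /\ Rabs (z n - c) < / (INR k + 1)).
  { intros k. apply (H _ (inv_pos k) k). }
  exists (fun k => proj1_sig (constructive_indefinite_description _ (Hp k))).
  split; intros k; destruct (constructive_indefinite_description _ (Hp k)); simpl; tauto.
Qed.

Lemma cl2_cl_l x y a b : cl2 x y a b -> cl x a.
Proof. intros H e He N. destruct (H e He N) as [n [? [? ?]]]. eauto. Qed.
Lemma cl2_cl_r x y a b : cl2 x y a b -> cl y b.
Proof. intros H e He N. destruct (H e He N) as [n [? [? ?]]]. eauto. Qed.

Lemma cl_ex_r x y a : bounded_seq x -> bounded_seq y -> cl x a -> exists b, cl2 x y a b.
Proof.
  intros Bx By Ha. destruct (cl_sub x a Ha) as [phi [Hphi Hc]].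
  destruct (BW2_sub x y phi Bx By Hphi) as [a' [b Hab]].
  assert (a' = a).
  { assert (a' - a = 0); [|lra].
    apply (zero_of_small _ 2); [lra|]. intros eps He.
    destruct (small_inv eps He) as [K HK].
    destruct (Hab eps He K) as [k [Hk [H1 _]]].
    specialize (HK k Hk). specialize (Hc k).
    apply abs_lt in H1; apply abs_lt in Hc; apply abs_lt. lra. }
  subst a'. exists b. apply (sub_cl2 x y phi); auto.
Qed.

Lemma cl_ex_l x y b : bounded_seq x -> bounded_seq y -> cl y b -> exists a, cl2 x y a b.
Proof.
  intros Bx By Hb. destruct (cl_ex_r y x b By Bx Hb) as [a Ha].
  exists a. intros e He N. destruct (Ha e He N) as [n [? [? ?]]]. eauto.
Qed.

Definition comb (x y : nat -> R) (t : R) : nat -> R := fun n => x n + t * y n.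

Lemma cl_comb x y t c : bounded_seq x -> bounded_seq y ->
  (cl (comb x y t) c <-> exists a b, cl2 x y a b /\ c = a + t * b).
Proof.
  intros Bx By. split.
  - intros Hc. destruct (cl_sub _ c Hc) as [phi [Hphi Hz]].
    destruct (BW2_sub x y phi Bx By Hphi) as [a [b Hab]].
    exists a, b. split. apply (sub_cl2 x y phi); auto.
    assert (c - (a + t*b) = 0); [|lra].
    apply (zero_of_small _ (2 + Rabs t)). pose proof (Rabs_pos t); lra.
    intros eps He. destruct (small_inv eps He) as [K HK].
    destruct (Hab eps He K) as [k [Hk [H1 H2]]].
    specialize (HK k Hk). specialize (Hz k). unfold comb in Hz.
    replace (c - (a + t*b)) with (-(x (phi k) + t * y (phi k) - c) + (x (phi k) - a) + t * (y (phi k) - b)) by ring.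
    eapply Rle_lt_trans. apply Rabs_triang.
    eapply Rle_lt_trans. apply Rplus_le_compat_r. apply Rabs_triang.
    rewrite Rabs_Ropp, Rabs_mult.
    assert (Rabs t * Rabs (y (phi k) - b) <= Rabs t * eps).
    { apply Rmult_le_compat_l. apply Rabs_pos. lra. }
    nra.
  - intros [a [b [Hab ->]]] eps He N.
    set (e' := eps / (1 + Rabs t)).
    assert (Ht : 0 < 1 + Rabs t) by (pose proof (Rabs_pos t); lra).
    assert (He' : 0 < e') by (apply Rdiv_lt_0_compat; auto).
    destruct (Hab e' He' N) as [n [Hn [H1 H2]]]. exists n. split; auto.
    unfold comb. replace (x n + t * y n - (a + t * b)) with ((x n - a) + t * (y n - b)) by ring.
    eapply Rle_lt_trans. apply Rabs_triang. rewrite Rabs_mult.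
    assert (Rabs t * Rabs (y n - b) <= Rabs t * e').
    { apply Rmult_le_compat_l. apply Rabs_pos. lra. }
    assert (eps = e' * (1 + Rabs t)) by (unfold e'; field; lra).
    nra.
Qed.

Definition dec {T : Type} (x y : T) : {x = y} + {x <> y} := excluded_middle_informative (x = y).
Definition pb (P : Prop) : bool := if excluded_middle_informative P then true else false.
Lemma pb_true P : pb P = true <-> P.
Proof. unfold pb; destruct (excluded_middle_informative P); split; intros; auto; discriminate. Qed.
Lemma pb_false P : negb (pb P) = true <-> ~ P.
Proof. unfold pb; destruct (excluded_middle_informative P); simpl; split; intros; auto; try discriminate; tauto. Qed.

Definition card_eq {T : Type} (P : T -> Prop) (m : nat) : Prop :=
  exists l : list T, NoDup l /\ length l = m /\ (forall r, P r <-> In r l).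

Lemma fin_list {T : Type} (P : T -> Prop) (l : list T) : (forall z, P z -> In z l) ->
  exists l', NoDup l' /\ forall z, P z <-> In z l'.
Proof.
  intros H. exists (nodup dec (filter (fun z => pb (P z)) l)). split.
  apply NoDup_nodup. intros z. rewrite nodup_In, filter_In, pb_true. firstorder.
Qed.

Lemma fin_card {T : Type} (P : T -> Prop) (l : list T) : (forall z, P z -> In z l) ->
  exists m, card_eq P m.
Proof. intros H. destruct (fin_list P l H) as [l' [H1 H2]]. exists (length l'), l'. auto. Qed.

Lemma card_le {T : Type} (P Q : T -> Prop) m k : card_eq P m -> card_eq Q k ->
  (forall z, P z -> Q z) -> (m <= k)%nat.
Proof.
  intros [l [Hl [<- Hpl]]] [l' [Hl' [<- Hql]]] H.
  apply NoDup_incl_length; auto. intros z Hz. apply Hql, H, Hpl, Hz.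
Qed.

Lemma card_unique {T : Type} (P : T -> Prop) m k : card_eq P m -> card_eq P k -> m = k.
Proof. intros H1 H2. pose proof (card_le P P m k H1 H2 (fun z h => h)).
  pose proof (card_le P P k m H2 H1 (fun z h => h)). lia. Qed.

Definition injon {A B : Type} (g : A -> B) (s : list A) :=
  forall q q', In q s -> In q' s -> g q = g q' -> q = q'.

Lemma nodup_map_inj {A B : Type} (g : A -> B) (s : list A) : NoDup s -> injon g s -> NoDup (map g s).
Proof.
  induction s as [|a s IH]; simpl; intros Hn Hi; constructor.
  - intros Hin. apply in_map_iff in Hin. destruct Hin as [q [Hq Hqs]].
    inversion Hn; subst. assert (q = a) by (apply Hi; simpl; auto). subst. tauto.
  - inversion Hn; subst. apply IH; auto. intros q q' Ha Hb Hc. apply Hi; simpl; auto.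
Qed.

Definition img {A B : Type} (g : A -> B) (s : list A) : B -> Prop :=
  fun c => exists q, In q s /\ c = g q.

Lemma img_card_ex {A B : Type} (g : A -> B) s : exists k, card_eq (img g s) k.
Proof. apply (fin_card _ (map g s)). intros z [q [Hq ->]]. apply in_map; auto. Qed.

Lemma img_card_le {A B : Type} (g : A -> B) s k : card_eq (img g s) k -> (k <= length s)%nat.
Proof.
  intros [l [Hl [<- Hi]]]. rewrite <- (length_map g s). apply NoDup_incl_length; auto.
  intros z Hz. apply Hi in Hz. destruct Hz as [q [Hq ->]]. apply in_map; auto.
Qed.

Lemma img_card_ge {A B : Type} (g : A -> B) s s' k : card_eq (img g s) k ->
  NoDup s' -> incl s' s -> injon g s' -> (length s' <= k)%nat.
Proof.
  intros [l [Hl [<- Hi]]] Hn Hinc Hinj. rewrite <- (length_map g s').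
  apply NoDup_incl_length. apply nodup_map_inj; auto.
  intros z Hz. apply in_map_iff in Hz. destruct Hz as [q [<- Hq]]. apply Hi. exists q; auto.
Qed.

Lemma img_card_lt {A B : Type} (g : A -> B) s k q q' : card_eq (img g s) k ->
  NoDup s -> In q s -> In q' s -> q <> q' -> g q = g q' -> (k < length s)%nat.
Proof.
  intros [l [Hl [<- Hi]]] Hn Hq Hq' Hne Hg.
  apply Nat.le_lt_trans with (length (map g (remove dec q s))).
  - apply NoDup_incl_length; auto. intros z Hz. apply Hi in Hz. destruct Hz as [r [Hr ->]].
    destruct (dec r q) as [->|Hrq].
    + rewrite Hg. apply in_map. apply in_in_remove; auto.
    + apply in_map. apply in_in_remove; auto.
  - rewrite length_map. apply remove_length_lt; auto.
Qed.

Lemma max_list (l : list R) : l <> nil -> exists m, In m l /\ forall x, In x l -> x <= m.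
Proof.
  induction l as [|a l IH]; intros H; [congruence|].
  destruct l as [|b l].
  - exists a. simpl. split; auto. intros x [->|[]]; lra.
  - destruct IH as [m [Hm Hmx]]; [discriminate|].
    destruct (Rle_dec a m).
    + exists m. split. right; auto. intros x [<-|Hx]; auto.
    + exists a. split. left; auto. intros x [<-|Hx]. lra. specialize (Hmx x Hx). lra.
Qed.

Definition gtf (t : R) (q : R*R) : R := fst q + t * snd q.
Definition val (pq : (R*R)*(R*R)) : R :=
  (fst (snd pq) - fst (fst pq)) / (snd (fst pq) - snd (snd pq)).

Lemma collide t q q' : q <> q' -> gtf t q = gtf t q' -> snd q <> snd q' /\ t = val (q,q').
Proof.
  destruct q as [a b], q' as [a' b']; unfold gtf, val; simpl; intros Hne Heq.
  destruct (Req_dec b b') as [->|Hb].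
  - exfalso. apply Hne. f_equal. lra.
  - split; auto. field_simplify_eq; [|lra]. lra.
Qed.

Definition Tl (s : list (R*R)) : list R :=
  map val (filter (fun pq => negb (pb (snd (fst pq) = snd (snd pq)))) (list_prod s s)).

Lemma in_Tl s q q' : In q s -> In q' s -> snd q <> snd q' -> In (val (q,q')) (Tl s).
Proof.
  intros H1 H2 H3. unfold Tl. apply in_map. apply filter_In. split.
  apply in_prod; auto. apply pb_false. simpl; auto.
Qed.

Lemma comb_generic s : exists t, injon (gtf t) s.
Proof.
  destruct (max_list (0 :: Tl s)) as [m [_ Hm]]; [discriminate|].
  exists (m + 1). intros q q' Hq Hq' Hg.
  destruct (dec q q') as [|Hne]; auto.
  destruct (collide _ _ _ Hne Hg) as [Hs Ht].
  pose proof (Hm _ (or_intror (in_Tl s q q' Hq Hq' Hs))). lra.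
Qed.

Definition rowmax (s : list (R*R)) (q : R*R) : Prop :=
  forall a', In (a', snd q) s -> a' <= fst q.

Lemma comb_special s (ly : list R) : NoDup s -> (forall q, In q s -> In (snd q) ly) ->
  (exists q q', In q s /\ In q' s /\ snd q <> snd q') ->
  exists t q q' s', In q s /\ In q' s /\ q <> q' /\ gtf t q = gtf t q' /\
    NoDup s' /\ incl s' s /\ injon (gtf t) s' /\ (length s <= length s' + length ly)%nat.
Proof.
  intros Hn Hly [q0 [q0' [Hq0 [Hq0' Hs0]]]].
  destruct (max_list (Tl s)) as [m [Hm Hmx]].
  { intros E. pose proof (in_Tl s q0 q0' Hq0 Hq0' Hs0). rewrite E in H. destruct H. }
  unfold Tl in Hm. apply in_map_iff in Hm. destruct Hm as [[q q'] [Hv Hin]].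
  apply filter_In in Hin. destruct Hin as [Hin Hb]. apply in_prod_iff in Hin.
  apply pb_false in Hb. simpl in Hb.
  exists m, q, q', (filter (fun r => negb (pb (rowmax s r))) s).
  split; [tauto|]. split; [tauto|]. split.
  { intros ->. tauto. }
  split.
  { rewrite <- Hv. destruct q as [a b], q' as [a' b']; unfold gtf, val; simpl in *.
    field. lra. }
  split. apply NoDup_filter; auto.
  split. intros r Hr. apply filter_In in Hr; tauto.
  split.
  - intros r r' Hr Hr' Hg. apply filter_In in Hr, Hr'.
    destruct Hr as [Hr Hnr], Hr' as [Hr' Hnr']. apply pb_false in Hnr, Hnr'.
    destruct (dec r r') as [|Hne]; auto. exfalso.
    destruct (collide _ _ _ Hne Hg) as [Hs Ht].
    destruct r as [a b], r' as [a' b']. unfold val in Ht; simpl in *.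
    destruct (Rlt_or_le b b') as [Hlt|Hle].
    + apply Hnr. intros a'' Ha''. apply Rnot_lt_le. intros Hgt. simpl in Hgt, Ha''.
      pose proof (Hmx _ (in_Tl s (a'',b) (a',b') Ha'' Hr' Hs)). unfold val in H; simpl in H.
      assert (Hd : b - b' < 0) by lra.
      assert ((a' - a) / (b - b') < (a' - a'') / (b - b')).
      { unfold Rdiv. rewrite (Rmult_comm (a'-a)), (Rmult_comm (a'-a'')). apply Rmult_lt_gt_compat_neg_l. apply Rinv_lt_0_compat; lra. lra. }
      lra.
    + apply Hnr'. intros a'' Ha''. apply Rnot_lt_le. intros Hgt. simpl in Hgt, Ha''.
      pose proof (Hmx _ (in_Tl s (a,b) (a'',b') Hr Ha'' Hs)). unfold val in H; simpl in H.
      assert (Hd : b - b' > 0) by lra.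
      assert ((a' - a) / (b - b') < (a'' - a) / (b - b')).
      { unfold Rdiv. apply Rmult_lt_compat_r. apply Rinv_0_lt_compat; lra. lra. }
      lra.
  - rewrite <- (filter_length (fun r => pb (rowmax s r)) s).
    rewrite Nat.add_comm. apply Nat.add_le_mono_l.
    rewrite <- (length_map snd).
    apply NoDup_incl_length.
    + apply nodup_map_inj. apply NoDup_filter; auto.
      intros r r' Hr Hr' Hsn. apply filter_In in Hr, Hr'.
      destruct Hr as [Hr Hm1], Hr' as [Hr' Hm2]. apply (proj1 (pb_true _)) in Hm1; apply (proj1 (pb_true _)) in Hm2.
      destruct r as [a b], r' as [a' b']; simpl in *. subst b'.
      specialize (Hm1 a' Hr'). specialize (Hm2 a Hr). simpl in *. f_equal. lra.
    + intros z Hz. apply in_map_iff in Hz. destruct Hz as [r [<- Hr]].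
      apply filter_In in Hr. apply Hly. tauto.
Qed.

Fixpoint sumn (F : nat -> R) (m : nat) : R :=
  match m with O => 0 | S m' => sumn F m' + F m' end.

Lemma sumn_ext F G m : (forall k, (k < m)%nat -> F k = G k) -> sumn F m = sumn G m.
Proof. induction m; simpl; intros H; auto. rewrite IHm, H; auto. Qed.

Lemma sumn_zero F m : (forall k, (k < m)%nat -> F k = 0) -> sumn F m = 0.
Proof. induction m; simpl; intros H; auto. rewrite IHm, H; auto. ring. Qed.

Lemma sumn_minus F G m : sumn (fun k => F k - G k) m = sumn F m - sumn G m.
Proof. induction m; simpl; [ring|]. rewrite IHm; ring. Qed.

Lemma sumn_plus F G m : sumn (fun k => F k + G k) m = sumn F m + sumn G m.
Proof. induction m; simpl; [ring|]. rewrite IHm; ring. Qed.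

Lemma sumn_scal F a m : sumn (fun k => F k * a) m = sumn F m * a.
Proof. induction m; simpl; [ring|]. rewrite IHm; ring. Qed.

Lemma sumn_sum_f F n : sum_f_R0 F n = sumn F (S n).
Proof. induction n; simpl; [ring|]. rewrite IHn. simpl. ring. Qed.

Definition sig0 (i0 k : nat) : nat := if (k <? i0)%nat then k else S k.

Lemma sumn_skip F m' i0 : (i0 < S m')%nat ->
  sumn F (S m') = F i0 + sumn (fun k => F (sig0 i0 k)) m'.
Proof.
  revert i0. induction m' as [|m' IH]; intros i0 Hi.
  - simpl. assert (i0 = 0%nat) by lia. subst. ring.
  - destruct (Nat.eq_dec i0 (S m')) as [->|Hne].
    + change (sumn F (S (S m'))) with (sumn F (S m') + F (S m')).
      rewrite (sumn_ext (fun k => F (sig0 (S m') k)) F).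
      ring. intros k Hk. unfold sig0. destruct (Nat.ltb_spec k (S m')); [auto|lia].
    + change (sumn F (S (S m'))) with (sumn F (S m') + F (S m')).
      rewrite (IH i0) by lia.
      change (sumn (fun k => F (sig0 i0 k)) (S m')) with (sumn (fun k => F (sig0 i0 k)) m' + F (sig0 i0 m')).
      replace (sig0 i0 m') with (S m'). ring.
      unfold sig0. destruct (Nat.ltb_spec m' i0); [lia|]. auto.
Qed.

Lemma dep (n : nat) : forall (m : nat) (v : nat -> nat -> R), (n < m)%nat ->
  exists c : nat -> R, (exists i, (i < m)%nat /\ c i <> 0) /\
    forall j, (j < n)%nat -> sumn (fun i => c i * v i j) m = 0.
Proof.
  induction n as [|n IH]; intros m v Hm.
  - exists (fun _ => 1). split. exists 0%nat. split; [lia|lra]. intros j Hj; lia.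
  - destruct m as [|m']; [lia|].
    destruct (classic (exists i0, (i0 < S m')%nat /\ v i0 n <> 0)) as [[i0 [Hi0 Hv0]]|Hall].
    + set (v' := fun i j => v (sig0 i0 i) j - (v (sig0 i0 i) n / v i0 n) * v i0 j).
      destruct (IH m' v') as [c' [[k0 [Hk0 Hck0]] Hc']]; [lia|].
      set (S2 := sumn (fun k => c' k * (v (sig0 i0 k) n / v i0 n)) m').
      exists (fun i => if (i =? i0)%nat then - S2 else c' (if (i <? i0)%nat then i else pred i)).
      assert (Hsig : forall k, (sig0 i0 k =? i0)%nat = false /\
                  (if (sig0 i0 k <? i0)%nat then sig0 i0 k else pred (sig0 i0 k)) = k).
      { intros k. unfold sig0. destruct (Nat.ltb_spec k i0).
        - split. apply Nat.eqb_neq; lia. destruct (Nat.ltb_spec k i0); lia.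
        - split. apply Nat.eqb_neq; lia. destruct (Nat.ltb_spec (S k) i0); simpl; lia. }
      split.
      * exists (sig0 i0 k0). split. unfold sig0; destruct (Nat.ltb_spec k0 i0); lia.
        destruct (Hsig k0) as [-> ->]. auto.
      * assert (Key : forall j, sumn (fun i => (if (i =? i0)%nat then - S2 else
                  c' (if (i <? i0)%nat then i else pred i)) * v i j) (S m') =
                  sumn (fun k => c' k * v' k j) m').
        { intros j. rewrite (sumn_skip _ m' i0 Hi0). rewrite Nat.eqb_refl.
          rewrite (sumn_ext _ (fun k => c' k * v (sig0 i0 k) j)).
          2:{ intros k _. destruct (Hsig k) as [-> ->]. auto. }
          assert (E : sumn (fun k => c' k * v' k j) m' = sumn (fun k => c' k * v (sig0 i0 k) j) m' - S2 * v i0 j).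
          { unfold S2. rewrite <- sumn_scal, <- sumn_minus. apply sumn_ext. intros k _. unfold v'. ring. }
          rewrite E. ring. }
        intros j Hj. rewrite Key. destruct (Nat.eq_dec j n) as [->|Hjn].
        -- apply sumn_zero. intros k _. unfold v'. field. auto.
        -- apply Hc'. lia.
    + destruct (IH (S m') v) as [c [Hnz Hc]]; [lia|].
      exists c. split; auto. intros j Hj. destruct (Nat.eq_dec j n) as [->|Hjn].
      * apply sumn_zero. intros k Hk. destruct (Req_dec (v k n) 0) as [->|H]. ring.
        exfalso. apply Hall. eauto.
      * apply Hc. lia.
Qed.

Definition goodV (A : nat -> Prop) (V : (nat -> R) -> Prop) :=
  linear_subspace V /\ forall x, V x -> L_of A x \/ x = zero_seq.

Lemma card_ext {T : Type} (P Q : T -> Prop) k : (forall z, P z <-> Q z) -> card_eq P k -> card_eq Q k.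
Proof. intros H [l [H1 [H2 H3]]]. exists l. split; auto. split; auto. intros r. rewrite <- H. auto. Qed.

Lemma bounded_cl_ex x : bounded_seq x -> exists a, cl x a.
Proof.
  intros Bx. destruct (BW_sub x (fun k => k) Bx) as [a Ha]. exists a.
  intros e He N. destruct (Ha e He N) as [k [? ?]]. eauto.
Qed.

Lemma zero_cl a : cl zero_seq a -> a = 0.
Proof.
  intros H. assert (- a = 0); [|lra]. apply (zero_of_small _ 1); [lra|].
  intros e He. destruct (H e He 0%nat) as [n [_ Hn]]. unfold zero_seq in Hn.
  rewrite Rmult_1_r. replace (0 - a) with (- a) in Hn by ring. auto.
Qed.

Lemma V_bounded A V x : goodV A V -> V x -> bounded_seq x.
Proof.
  intros [_ HV] Hx. destruct (HV x Hx) as [[B _]| ->]; auto.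
  exists 0. intros n. unfold zero_seq. rewrite Rabs_R0. lra.
Qed.

Lemma V_props A V z : ~ A 1%nat -> goodV A V -> V z -> z <> zero_seq ->
  exists l, NoDup l /\ (forall a, cl z a <-> In a l) /\ A (length l) /\ (2 <= length l)%nat.
Proof.
  intros HA1 [HV1 HV] Hz Hnz. destruct (HV z Hz) as [[Bz [m [Hm [l [Hl [Hlen Hin]]]]]]|]; [|congruence].
  exists l. split; auto. split.
  { intros a. rewrite <- acc_cl. auto. }
  subst m. split; auto.
  destruct (bounded_cl_ex z Bz) as [a Ha]. apply acc_cl, Hin in Ha.
  destruct l as [|b [|c l]]. destruct Ha. simpl in Hm. tauto. simpl. lia.
Qed.

Lemma V_fin A V z : goodV A V -> V z -> exists l, forall a, cl z a -> In a l.
Proof.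
  intros [HV1 HV] Hz. destruct (HV z Hz) as [[Bz [m [Hm [l [Hl [Hlen Hin]]]]]]| ->].
  - exists l. intros a Ha. apply Hin, acc_cl, Ha.
  - exists (0 :: nil). intros a Ha. apply zero_cl in Ha. left; auto.
Qed.

Lemma V_card A V z k : ~ A 1%nat -> goodV A V -> V z -> card_eq (cl z) k -> (2 <= k)%nat ->
  z <> zero_seq /\ A k.
Proof.
  intros HA1 HG Hz Hk H2.
  assert (Hnz : z <> zero_seq).
  { intros ->. assert (card_eq (fun a : R => a = 0) 1).
    { exists (0 :: nil). split. constructor. auto. constructor. split; auto.
      intros r. simpl. split; intros; [left|]; intuition. }
    pose proof (card_le _ _ _ _ Hk H zero_cl). lia. }
  split; auto. destruct (V_props A V z HA1 HG Hz Hnz) as [l [Hl [Hin [HA _]]]].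
  assert (k = length l); [|subst; auto].
  apply (card_unique (cl z)); auto. exists l. auto.
Qed.

Lemma V_comb A V x y t : goodV A V -> V x -> V y -> V (comb x y t).
Proof.
  intros [[_ [Hadd Hsc]] _] Hx Hy. unfold comb.
  apply (Hadd x (fun n => t * y n)); auto.
Qed.

Lemma V_sum A V (f : nat -> nat -> R) (c : nat -> R) n : goodV A V ->
  (forall i, (i <= n)%nat -> V (f i)) -> V (fun k => sum_f_R0 (fun i => c i * f i k) n).
Proof.
  intros [[_ [Hadd Hsc]] _] Hf. induction n.
  - simpl. apply Hsc. apply Hf. lia.
  - simpl. apply (Hadd (fun k => sum_f_R0 (fun i => c i * f i k) n) (fun k => c (S n) * f (S n) k)).
    apply IHn. intros; apply Hf; lia. apply Hsc, Hf. lia.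
Qed.

Lemma pair_list A V x y : goodV A V -> V x -> V y ->
  exists s, NoDup s /\ forall a b, cl2 x y a b <-> In (a,b) s.
Proof.
  intros HG Hx Hy. destruct (V_fin A V x HG Hx) as [lx Hlx]. destruct (V_fin A V y HG Hy) as [ly Hly].
  destruct (fin_list (fun q : R*R => cl2 x y (fst q) (snd q)) (list_prod lx ly)) as [s [Hs Hin]].
  { intros [a b] H. simpl in H. apply in_prod. apply Hlx, (cl2_cl_l _ _ _ _ H).
    apply Hly, (cl2_cl_r _ _ _ _ H). }
  exists s. split; auto. intros a b. apply (Hin (a,b)).
Qed.

Lemma comb_card x y s t k : bounded_seq x -> bounded_seq y ->
  (forall a b, cl2 x y a b <-> In (a,b) s) ->
  card_eq (img (gtf t) s) k -> card_eq (cl (comb x y t)) k.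
Proof.
  intros Bx By Hs. apply card_ext. intros c. rewrite cl_comb by auto. split.
  - intros [[a b] [Hq ->]]. exists a, b. split. apply Hs; auto. auto.
  - intros [a [b [Hab ->]]]. exists (a,b). split. apply Hs; auto. auto.
Qed.

Lemma graph A V w n : ~ A 1%nat -> goodV A V -> V w -> w <> zero_seq -> card_eq (cl w) n ->
  (forall z k, V z -> z <> zero_seq -> card_eq (cl z) k -> (k <= n)%nat) ->
  forall y, V y -> forall a b b', cl2 w y a b -> cl2 w y a b' -> b = b'.
Proof.
  intros HA1 HG Hw Hwn Hn Hmax y Hy a b b' Hb Hb'.
  destruct (Req_dec b b') as [|Hne]; auto. exfalso.
  pose proof (V_bounded A V w HG Hw) as Bw. pose proof (V_bounded A V y HG Hy) as By.
  destruct (pair_list A V w y HG Hw Hy) as [s [Hs Hin]].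
  destruct (comb_generic s) as [t Ht].
  destruct (img_card_ex (gtf t) s) as [k Hk].
  pose proof (img_card_ge _ _ s k Hk Hs (fun z h => h) Ht) as Hk1.
  assert (Hfst : card_eq (img fst s) n).
  { apply (card_ext (cl w)); auto. intros c. split.
    - intros Hc. destruct (cl_ex_r w y c Bw By Hc) as [d Hd]. exists (c,d). split; auto. apply Hin; auto.
    - intros [[cc dd] [Hq ->]]. apply Hin in Hq. apply (cl2_cl_l _ _ _ _ Hq). }
  assert (Hlt : (n < length s)%nat).
  { apply (img_card_lt fst s n (a,b) (a,b') Hfst Hs); try apply Hin; auto.
    intros E; inversion E; auto. }
  destruct (V_props A V w HA1 HG Hw Hwn) as [l [Hl [Hil [_ H2]]]].
  assert (n = length l) by (apply (card_unique (cl w)); auto; exists l; auto). subst n.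
  pose proof (comb_card w y s t k Bw By Hin Hk) as Hck.
  destruct (V_card A V (comb w y t) k HA1 HG (V_comb A V w y t HG Hw Hy) Hck) as [Hnz _]; [lia|].
  pose proof (Hmax _ _ (V_comb A V w y t HG Hw Hy) Hnz Hck). lia.
Qed.

Lemma CC w y a b : bounded_seq w -> bounded_seq y -> (forall b', cl2 w y a b' -> b' = b) ->
  forall eps, 0 < eps -> exists delta, 0 < delta /\ exists N, forall n, (N <= n)%nat ->
     Rabs (w n - a) < delta -> Rabs (y n - b) < eps.
Proof.
  intros Bw By U eps He. apply NNPP. intros Hno.
  assert (Hp : forall k, exists n, (k <= n)%nat /\ Rabs (w n - a) < / (INR k + 1) /\ ~ Rabs (y n - b) < eps).
  { intros k. apply NNPP. intros Hk. apply Hno. exists (/ (INR k + 1)). split. apply inv_pos.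
    exists k. intros n Hn Hw. apply NNPP. intros Hy. apply Hk. exists n. auto. }
  pose (phi := fun k => proj1_sig (constructive_indefinite_description _ (Hp k))).
  assert (Hphi : forall k, (k <= phi k)%nat /\ Rabs (w (phi k) - a) < / (INR k + 1) /\ ~ Rabs (y (phi k) - b) < eps).
  { intros k. unfold phi. destruct (constructive_indefinite_description _ (Hp k)); auto. }
  destruct (BW_sub y phi By) as [b' Hb'].
  assert (b' = b).
  { apply U. apply (sub_cl2 w y phi). intros k; apply Hphi.
    intros e Hee N. destruct (small_inv e Hee) as [K HK].
    destruct (Hb' e Hee (Nat.max N K)) as [k [Hk Hyk]]. exists k. split; [lia|]. split; auto.
    apply Rlt_trans with (/ (INR k + 1)). apply Hphi. apply HK. lia. }
  subst b'. destruct (Hb' eps He 0%nat) as [k [_ Hk]]. apply (Hphi k). auto.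
Qed.

Lemma fin_min (n : nat) (Q : nat -> R -> nat -> Prop) :
  (forall i d d' N N', Q i d N -> 0 < d' -> d' <= d -> (N <= N')%nat -> Q i d' N') ->
  (forall i, (i <= n)%nat -> exists d, 0 < d /\ exists N, Q i d N) ->
  exists d, 0 < d /\ exists N, forall i, (i <= n)%nat -> Q i d N.
Proof.
  intros Hmono H. induction n.
  - destruct (H 0%nat (le_n 0)) as [d [Hd [N HN]]]. exists d. split; auto. exists N.
    intros i Hi. assert (i = 0%nat) by lia. subst. auto.
  - destruct IHn as [d [Hd [N HN]]]. intros i Hi; apply H; lia.
    destruct (H (S n) (le_n _)) as [d' [Hd' [N' HN']]].
    exists (Rmin d d'). split. apply Rmin_pos; auto. exists (Nat.max N N').
    intros i Hi. destruct (Nat.eq_dec i (S n)) as [->|Hne].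
    + apply (Hmono _ d' _ N'). exact HN'. apply Rmin_pos; auto. apply Rmin_r. lia.
    + apply (Hmono _ d _ N). apply HN; lia. apply Rmin_pos; auto. apply Rmin_l. lia.
Qed.

Lemma sum_bound (c u : nat -> R) eps n : (forall i, (i <= n)%nat -> Rabs (u i) <= eps) ->
  Rabs (sum_f_R0 (fun i => c i * u i) n) <= eps * sum_f_R0 (fun i => Rabs (c i)) n.
Proof.
  induction n; intros H; simpl.
  - rewrite Rabs_mult. pose proof (Rabs_pos (c 0%nat)). pose proof (H 0%nat (le_n _)). nra.
  - eapply Rle_trans. apply Rabs_triang. rewrite Rmult_plus_distr_l.
    apply Rplus_le_compat. apply IHn. intros; apply H; lia.
    rewrite Rabs_mult. pose proof (Rabs_pos (c (S n))). pose proof (H (S n) (le_n _)). nra.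
Qed.

Lemma sum_abs_pos (c : nat -> R) n : 0 <= sum_f_R0 (fun i => Rabs (c i)) n.
Proof. induction n; simpl. apply Rabs_pos. pose proof (Rabs_pos (c (S n))). lra. Qed.

Lemma nat_max (P : nat -> Prop) N n0 : P n0 -> (forall n, P n -> (n < N)%nat) ->
  exists n, P n /\ forall m, P m -> (m <= n)%nat.
Proof.
  intros H0 HN. assert (Hd : forall d n0, P n0 -> (N - n0 <= d)%nat -> exists n, P n /\ forall m, P m -> (m <= n)%nat).
  { induction d; intros n1 H1 Hd.
    - specialize (HN n1 H1). lia.
    - destruct (classic (exists m, P m /\ (n1 < m)%nat)) as [[m [Hm Hlt]]|Hno].
      + apply (IHd m); auto. specialize (HN m Hm). lia.
      + exists n1. split; auto. intros m Hm. apply Nat.nlt_ge. intros Hlt. apply Hno; eauto. }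
  apply (Hd N n0); auto. lia.
Qed.

Lemma only_zero A V y : ~ A 1%nat -> goodV A V -> V y -> (forall b, cl y b -> b = 0) -> y = zero_seq.
Proof.
  intros HA1 HG Hy H. apply NNPP. intros Hnz.
  destruct (V_props A V y HA1 HG Hy Hnz) as [l [Hl [Hin [_ H2]]]].
  assert (card_eq (fun a : R => a = 0) 1).
  { exists (0 :: nil). split. constructor. auto. constructor. split; auto.
    intros r. simpl. split; intros; [left|]; intuition. }
  assert (Hc : card_eq (cl y) (length l)) by (exists l; auto).
  pose proof (card_le _ _ _ _ Hc H0 H). lia.
Qed.

Lemma large A V : ~ A 1%nat -> goodV A V -> infinite_dimensional V ->
  forall N, exists z k, V z /\ z <> zero_seq /\ card_eq (cl z) k /\ (N <= k)%nat.
Proof.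
  intros HA1 HG Hinf N. apply NNPP. intros Hno.
  assert (Hb : forall z k, V z -> z <> zero_seq -> card_eq (cl z) k -> (k < N)%nat).
  { intros z k Hz Hnz Hk. apply Nat.nle_gt. intros Hge. apply Hno. exists z, k. auto. }
  set (P := fun n => exists z, V z /\ z <> zero_seq /\ card_eq (cl z) n).
  assert (HP0 : exists n0, P n0).
  { destruct (Hinf 1%nat) as [f [Hf Hli]].
    assert (Hf0 : f 0%nat <> zero_seq).
    { intros E. assert (H1 : (fun _ : nat => 1) 0%nat = 0).
      { apply (Hli (fun _ => 1) ltac:(intros n; simpl; rewrite E; unfold zero_seq; ring) 0%nat); lia. }
      lra. }
    destruct (V_props A V (f 0%nat) HA1 HG (Hf 0%nat ltac:(lia)) Hf0) as [l [Hl [Hin _]]].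
    exists (length l), (f 0%nat). split. apply Hf; lia. split; auto. exists l; auto. }
  destruct HP0 as [n0 HP0].
  destruct (nat_max P N n0 HP0) as [n [[w [Hw [Hwn Hwc]]] Hmax]].
  { intros m [z [Hz [Hnz Hc]]]. apply (Hb z); auto. }
  assert (Hmax' : forall z k, V z -> z <> zero_seq -> card_eq (cl z) k -> (k <= n)%nat).
  { intros z k Hz Hnz Hc. apply Hmax. exists z; auto. }
  destruct (V_props A V w HA1 HG Hw Hwn) as [lw [Hlw [Hinw [_ H2]]]].
  assert (Hn : n = length lw) by (apply (card_unique (cl w)); auto; exists lw; auto).
  destruct (Hinf (S n)) as [f [Hf Hli]].
  pose proof (V_bounded A V w HG Hw) as Bw.
  set (h := fun i a => epsilon (inhabits 0) (fun b => cl2 w (f i) a b)).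
  assert (Hh : forall i a, (i <= n)%nat -> cl w a -> cl2 w (f i) a (h i a)).
  { intros i a Hi Ha. unfold h. apply epsilon_spec.
    apply cl_ex_r; auto. apply (V_bounded A V); auto. apply Hf; lia. }
  destruct (dep n (S n) (fun i j => h i (nth j lw 0)) (Nat.lt_succ_diag_r n)) as [c [[i0 [Hi0 Hci0]] Hc]].
  set (y := fun k => sum_f_R0 (fun i => c i * f i k) n).
  assert (Hy : V y) by (apply (V_sum A V); auto; intros; apply Hf; lia).
  assert (Hy0 : forall b, cl y b -> b = 0).
  { intros b Hcb.
    destruct (cl_ex_l w y b Bw (V_bounded A V y HG Hy) Hcb) as [a Hab].
    pose proof (cl2_cl_l _ _ _ _ Hab) as Ha.
    assert (Hal : In a lw) by (apply Hinw; auto).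
    destruct (In_nth lw a 0 Hal) as [j [Hj Hja]].
    assert (Hsum : sum_f_R0 (fun i => c i * h i a) n = 0).
    { rewrite sumn_sum_f. rewrite <- Hja. apply Hc. lia. }
    assert (K : forall eps, 0 < eps -> forall i, (i <= n)%nat -> exists d, 0 < d /\ exists N,
               forall k, (N <= k)%nat -> Rabs (w k - a) < d -> Rabs (f i k - h i a) < eps).
    { intros eps He i Hi. apply CC; auto. apply (V_bounded A V); auto. apply Hf; lia.
      intros b' Hb'. apply (graph A V w n HA1 HG Hw Hwn Hwc Hmax' (f i) ltac:(apply Hf; lia) a b' (h i a)); auto. }
    apply (zero_of_small _ (1 + sum_f_R0 (fun i => Rabs (c i)) n)).
    pose proof (sum_abs_pos c n); lra.
    intros eps He.
    destruct (fin_min n (fun i d N => forall k, (N <= k)%nat -> Rabs (w k - a) < d -> Rabs (f i k - h i a) < eps))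
      as [d [Hd [N0 HN0]]].
    { intros i d d' M M' HQ Hd' Hdd HM k Hk Hwk. apply HQ. lia. lra. }
    { intros i Hi. apply K; auto. }
    destruct (Hab (Rmin d eps) (Rmin_pos _ _ Hd He) N0) as [k [Hk [Hwk Hyk]]].
    assert (Hm1 := Rmin_l d eps). assert (Hm2 := Rmin_r d eps).
    assert (Hb1 : Rabs (y k - sum_f_R0 (fun i => c i * h i a) n) <= eps * sum_f_R0 (fun i => Rabs (c i)) n).
    { unfold y. replace (sum_f_R0 (fun i => c i * f i k) n - sum_f_R0 (fun i => c i * h i a) n)
        with (sum_f_R0 (fun i => c i * (f i k - h i a)) n).
      apply sum_bound. intros i Hi. left. apply (HN0 i Hi k Hk). lra.
      rewrite <- minus_sum. apply sum_eq. intros; ring. }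
    rewrite Hsum, Rminus_0_r in Hb1.
    replace b with (-(y k - b) + y k) by ring.
    eapply Rle_lt_trans. apply Rabs_triang. rewrite Rabs_Ropp. lra. }
  pose proof (only_zero A V y HA1 HG Hy Hy0) as Hyz.
  assert (c i0 = 0); [|tauto].
  apply (Hli c); auto. intros k. replace (pred (S n)) with n by lia.
  change (y k = 0). rewrite Hyz. reflexivity.
Qed.

Lemma nat_fin_max (p : nat) (Q : nat -> nat -> Prop) :
  (forall k N N', Q k N -> (N <= N')%nat -> Q k N') ->
  (forall k, (k <= p)%nat -> exists N, Q k N) -> exists N, forall k, (k <= p)%nat -> Q k N.
Proof.
  intros Hm H. induction p.
  - destruct (H 0%nat (le_n _)) as [N HN]. exists N. intros k Hk. assert (k = 0%nat) by lia. subst; auto.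
  - destruct IHp as [N HN]. intros; apply H; lia.
    destruct (H (S p) (le_n _)) as [N' HN']. exists (Nat.max N N').
    intros k Hk. destruct (Nat.eq_dec k (S p)) as [->|Hne].
    + apply (Hm _ N'); auto. lia.
    + apply (Hm _ N). apply HN; lia. lia.
Qed.

Lemma fst_card w y s n : bounded_seq w -> bounded_seq y ->
  (forall a b, cl2 w y a b <-> In (a,b) s) -> card_eq (cl w) n -> card_eq (img fst s) n.
Proof.
  intros Bw By Hin Hn. apply (card_ext (cl w)); auto. intros c. split.
  - intros Hc. destruct (cl_ex_r w y c Bw By Hc) as [d Hd]. exists (c,d). split; auto. apply Hin; auto.
  - intros [[cc dd] [Hq ->]]. apply Hin in Hq. apply (cl2_cl_l _ _ _ _ Hq).
Qed.

Theorem theorem2p3 (A : nat -> Prop) (hA1 : ~ A 1%nat) :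
  lineable (L_of A) ->
  exists k : nat, (1 <= k)%nat /\
    (forall N : nat, exists a : nat, (N <= a)%nat /\ A a /\ A (a + k)%nat).
Proof.
  intros [V [HV1 [Hinf HV2]]].
  assert (HG : goodV A V) by (split; auto).
  destruct (Hinf 1%nat) as [f [Hf Hli]].
  assert (Hu0 : f 0%nat <> zero_seq).
  { intros E. assert (H1 : (fun _ : nat => 1) 0%nat = 0).
    { apply (Hli (fun _ => 1) ltac:(intros n; simpl; rewrite E; unfold zero_seq; ring) 0%nat); lia. }
    lra. }
  set (u := f 0%nat). assert (Hu : V u) by (apply Hf; lia).
  destruct (V_props A V u hA1 HG Hu Hu0) as [lu [Hlu [Hinu [_ Hp2]]]].
  set (p := length lu).
  pose proof (V_bounded A V u HG Hu) as Bu.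
  assert (Claim : forall N, exists a k, (N <= a)%nat /\ (1 <= k)%nat /\ (k <= p)%nat /\ A a /\ A (a + k)%nat).
  { intros N.
    destruct (large A V hA1 HG Hinf (N + p + 2)) as [w [n [Hw [Hwn [Hwc Hnl]]]]].
    pose proof (V_bounded A V w HG Hw) as Bw.
    destruct (pair_list A V w u HG Hw Hu) as [s [Hs Hin]].
    assert (Hsnd : forall q, In q s -> In (snd q) lu).
    { intros [a b] Hq. apply Hinu. apply Hin in Hq. apply (cl2_cl_r _ _ _ _ Hq). }
    assert (Hdist : exists q q', In q s /\ In q' s /\ snd q <> snd q').
    { destruct lu as [|b1 [|b2 l]]; simpl in Hp2; try lia.
      assert (Hb : b1 <> b2). { intros E. inversion Hlu as [|? ? Hni]; subst. apply Hni. left; auto. }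
      destruct (cl_ex_l w u b1 Bw Bu (proj2 (Hinu b1) (or_introl eq_refl))) as [a1 H1].
      destruct (cl_ex_l w u b2 Bw Bu (proj2 (Hinu b2) (or_intror (or_introl eq_refl)))) as [a2 H2].
      exists (a1,b1), (a2,b2). split. apply Hin; auto. split. apply Hin; auto. simpl; auto. }
    destruct (comb_special s lu Hs Hsnd Hdist) as [t [q [q' [s' [Hq [Hq' [Hne [Hg [Hs' [Hinc [Hinj Hlen]]]]]]]]]]].
    destruct (comb_generic s) as [t1 Ht1].
    destruct (img_card_ex (gtf t1) s) as [k1 Hk1].
    destruct (img_card_ex (gtf t) s) as [k2 Hk2].
    pose proof (img_card_le _ _ _ Hk1). pose proof (img_card_ge _ _ s k1 Hk1 Hs (fun z h => h) Ht1).
    pose proof (img_card_lt _ _ _ q q' Hk2 Hs Hq Hq' Hne Hg).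
    pose proof (img_card_ge _ _ s' k2 Hk2 Hs' Hinc Hinj).
    pose proof (img_card_le _ _ _ (fst_card w u s n Bw Bu Hin Hwc)).
    fold p in Hlen.
    destruct (V_card A V (comb w u t1) k1 hA1 HG (V_comb A V w u t1 HG Hw Hu)
                (comb_card w u s t1 k1 Bw Bu Hin Hk1)) as [_ HA1']; [lia|].
    destruct (V_card A V (comb w u t) k2 hA1 HG (V_comb A V w u t HG Hw Hu)
                (comb_card w u s t k2 Bw Bu Hin Hk2)) as [_ HA2']; [lia|].
    exists k2, (k1 - k2)%nat. split; [lia|]. split; [lia|]. split; [lia|]. split; auto.
    replace (k2 + (k1 - k2))%nat with k1 by lia. auto. }
  apply NNPP. intros Hno.
  destruct (nat_fin_max p (fun k N => (1 <= k)%nat -> forall a, (N <= a)%nat -> ~ (A a /\ A (a + k)%nat)))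
    as [N HN].
  { intros k N N' HQ HNN Hk a Ha. apply HQ; auto. lia. }
  { intros k Hk. apply NNPP. intros Hnk. apply Hno. exists k. split.
    - apply NNPP. intros H1. apply Hnk. exists 0%nat. intros H1'. lia.
    - intros N. apply NNPP. intros HnN. apply Hnk. exists N. intros _ a Ha HA.
      apply HnN. exists a. tauto. }
  destruct (Claim N) as [a [k [Ha [Hk1 [Hkp [HAa HAk]]]]]].
  apply (HN k Hkp Hk1 a Ha). auto.
Qed.
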